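(* Let $P_n(x;a,b,c,d|q)$ denote the monic Askey–Wilson polynomials. Then $$\Big(x-\tfrac{a^{-1}+a}{2}\Big)P_n(x;aq,b,c,d|q)=P_{n+1}(x;a,b,c,d|q)+k_n^{(a,b,c,d)}P_n(x;a,b,c,d|q),$$ $$\Big(x-\tfrac{b^{-1}+b}{2}\Big)P_n(x;a,bq,c,d|q)=P_{n+1}(x;a,b,c,d|q)+k_n^{(b,a,c,d)}P_n(x;a,b,c,d|q),$$ $$\Big(x-\tfrac{c^{-1}+c}{2}\Big)P_n(x;a,b,cq,d|q)=P_{n+1}(x;a,b,c,d|q)+k_n^{(c,b,a,d)}P_n(x;a,b,c,d|q),$$ $$\Big(x-\tfrac{d^{-1}+d}{2}\Big)P_n(x;a,b,c,dq|q)=P_{n+1}(x;a,b,c,d|q)+k_n^{(d,b,c,a)}P_n(x;a,b,c,d|q),$$ where $$k_n^{(a,b,c,d)}=-\frac{(1-abq^n)(1-acq^n)(1-adq^n)(1-abcdq^{n-1})}{2a(1-abcdq^{2n-1})(1-abcdq^{2n})}$$ and $k_n^{(e_1,e_2,e_3,e_4)}$ denotes this expression with $(a,b,c,d)$ replaced by $(e_1,e_2,e_3,e_4)$.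
   Context: With $(a;q)_0=1$, $(a;q)_k=\prod_{j=0}^{k-1}(1-aq^j)$, $(a_1,\dots,a_i;q)_k=\prod_j(a_j;q)_k$, and $x=\cos\theta$, the Askey–Wilson polynomials are $p_n(x;a,b,c,d|q)=a^{-n}(ab,ac,ad;q)_n\sum_{k=0}^{n}\frac{(q^{-n},abcdq^{n-1},ae^{i\theta},ae^{-i\theta};q)_k}{(ab,ac,ad,q;q)_k}q^k$, and the monic Askey–Wilson polynomials are $P_n(x;a,b,c,d|q)=\dfrac{p_n(x;a,b,c,d|q)}{2^n(abcdq^{n-1};q)_n}$. *)

(* Defs.v *)
From HB Require Import structures.
From mathcomp Require Import all_boot all_order all_algebra.
Set Implicit Arguments. Unset Strict Implicit. Unset Printing Implicit Defensive.
Import Order.TTheory GRing.Theory Num.Theory.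
Local Open Scope ring_scope.

Definition qpoch (R : fieldType) (a q : R) (k : nat) : R :=
  \prod_(j < k) (1 - a * q ^+ j).

(* (a e^{i theta}, a e^{-i theta}; q)_k written in terms of x = cos theta:
   (1 - a e^{i th} q^j)(1 - a e^{-i th} q^j) = 1 - 2 a x q^j + a^2 q^{2j}. *)
Definition qpochx (R : fieldType) (a x q : R) (k : nat) : R :=
  \prod_(j < k) (1 - 2%:R * a * x * q ^+ j + a ^+ 2 * q ^+ (2 * j)).

Definition aw (R : fieldType) (x a b c d q : R) (n : nat) : R :=
  a ^- n * qpoch (a * b) q n * qpoch (a * c) q n * qpoch (a * d) q n *
  \sum_(k < n.+1)
     (qpoch (q ^- n) q k * qpoch (a * b * c * d * q ^ (n%:Z - 1)) q k
       * qpochx a x q k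
      / (qpoch (a * b) q k * qpoch (a * c) q k * qpoch (a * d) q k
         * qpoch q q k) * q ^+ k).

Definition awm (R : fieldType) (x a b c d q : R) (n : nat) : R :=
  aw x a b c d q n / (2%:R ^+ n * qpoch (a * b * c * d * q ^ (n%:Z - 1)) q n).

Definition kcoef (R : fieldType) (a b c d q : R) (n : nat) : R :=
  - ((1 - a * b * q ^+ n) * (1 - a * c * q ^+ n) * (1 - a * d * q ^+ n)
      * (1 - a * b * c * d * q ^ (n%:Z - 1)))
  / (2%:R * a * (1 - a * b * c * d * q ^ (2 * n%:Z - 1))
       * (1 - a * b * c * d * q ^+ (2 * n))).

(* Main.v *)
Require Import Defs.
From HB Require Import structures.
From mathcomp Require Import all_boot all_order all_algebra.
From mathcomp Require Import ring zify.
Import GRing.Theory.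
Local Open Scope ring_scope.

Section Basic.
Variable R : fieldType.
Implicit Types a b c d q x y : R.

Lemma qpochS a q k : qpoch a q k.+1 = qpoch a q k * (1 - a * q ^+ k).
Proof. by rewrite /qpoch big_ord_recr. Qed.

Lemma qpochSl a q k : qpoch a q k.+1 = (1 - a) * qpoch (a * q) q k.
Proof.
rewrite /qpoch big_ord_recl /= expr0 mulr1; congr (_ * _).
by apply: eq_bigr => i _; rewrite /= exprS mulrA.
Qed.

Lemma qpoch0 a q : qpoch a q 0 = 1.
Proof. by rewrite /qpoch big_ord0. Qed.

Lemma qpochxS a x q k : qpochx a x q k.+1 =
  qpochx a x q k * (1 - 2%:R * a * x * q ^+ k + a ^+ 2 * q ^+ (2 * k)).
Proof. by rewrite /qpochx big_ord_recr. Qed.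

Lemma qpochxSl a x q k : qpochx a x q k.+1 =
  (1 - 2%:R * a * x + a ^+ 2) * qpochx (a * q) x q k.
Proof.
rewrite /qpochx big_ord_recl /= !expr0 !mulr1; congr (_ * _).
apply: eq_bigr => i _; rewrite /= exprS mulnS exprD.
rewrite /bump leq0n add1n exprS; ring.
Qed.

Lemma qpochx0 a x q : qpochx a x q 0 = 1.
Proof. by rewrite /qpochx big_ord0. Qed.

Lemma qpoch_pre a q m k : qpoch a q m != 0 -> (k <= m)%N -> qpoch a q k != 0.
Proof.
elim: m => [|m IH] hm; first by rewrite leqn0 => /eqP ->.
rewrite leq_eqVlt => /orP [/eqP -> //| ]; rewrite ltnS; apply: IH.
by move: hm; rewrite qpochS mulf_eq0 negb_or => /andP [].
Qed.

Lemma qpoch_fac a q m k : qpoch a q m != 0 -> (k < m)%N -> 1 - a * q ^+ k != 0.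
Proof.
move=> hm hk; have := @qpoch_pre a q m k.+1 hm hk; rewrite qpochS mulf_eq0 negb_or.
by case/andP.
Qed.

Lemma qpoch_shift y q m : 1 - y != 0 ->
  qpoch (y * q) q m = qpoch y q m * (1 - y * q ^+ m) / (1 - y).
Proof.
move=> hy; rewrite -qpochS qpochSl; field; done.
Qed.

Lemma qpoch_qn q n : q != 0 -> qpoch (q ^- n) q n.+1 = 0.
Proof.
move=> hq; rewrite qpochS mulVf ?subrr ?mulr0 //.
by rewrite expf_neq0.
Qed.

Lemma exprz_m1 q n : q != 0 -> q ^ (n%:Z - 1) = q ^+ n / q.
Proof. by move=> hq; rewrite expfzDr // expr1z. Qed.

End Basic.
Arguments qpoch_pre {R a q m k}.
Arguments qpoch_fac {R a q m k}.

Section S.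
Variable R : fieldType.
Implicit Types a b c d q x : R.

Definition Cf a b c d q n k : R :=
  a ^- n * qpoch (a * b) q n * qpoch (a * c) q n * qpoch (a * d) q n /
   (2%:R ^+ n * qpoch (a * b * c * d * q ^ (n%:Z - 1)) q n) *
  (qpoch (q ^- n) q k * qpoch (a * b * c * d * q ^ (n%:Z - 1)) q k
    / (qpoch (a * b) q k * qpoch (a * c) q k * qpoch (a * d) q k * qpoch q q k)
    * q ^+ k).

Lemma awm_sum x a b c d q n :
  awm x a b c d q n = \sum_(k < n.+1) Cf a b c d q n k * qpochx a x q k.
Proof.
rewrite /awm /aw mulr_sumr mulr_suml; apply: eq_bigr => k _.
rewrite /Cf; set A := a ^- n * _ * _ * _; set B := (2%:R ^+ n * _).
set X := qpoch _ q k * _; set Y := (qpoch _ q k * _ * _ * _).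
ring.
Qed.

End S.
Arguments Cf {R}.
Definition gam (R : fieldType) (a b q : R) (k : nat) : R :=
  (1 + a ^+ 2 * q ^+ (2 * k)) / (2%:R * a * q ^+ k) - (b^-1 + b) / 2%:R.
Arguments gam {R}.

Lemma sum_ext (R : fieldType) (F G : nat -> R) m : F m.+1 = 0 ->
  \sum_(k < m.+1) F k * G k = \sum_(k < m.+2) F k * G k.
Proof. by move=> h; rewrite [RHS]big_ord_recr /= h mul0r addr0. Qed.

Definition shiftf (R : fieldType) (u : nat -> R) (k : nat) : R :=
  if k is k'.+1 then u k' else 0.
Arguments shiftf {R}.

Lemma sum_shift (R : fieldType) (u G : nat -> R) m :
  \sum_(k < m.+1) u k * G k.+1
  = \sum_(k < m.+2) shiftf u k * G k.
Proof.
rewrite [RHS]big_ord_recl /= mul0r add0r; apply: eq_bigr => i _.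
by rewrite add0n /bump leq0n add1n.
Qed.

Section Co.
Variables (R : fieldType) (a b c d q : R) (n : nat).
Hypotheses (h2 : 2%:R != 0 :> R)
  (ha : a != 0) (hb : b != 0) (hc : c != 0) (hd : d != 0) (hq : q != 0)
  (hqq : qpoch q q n.+1 != 0)
  (hab : qpoch (a * b) q n.+1 != 0) (hac : qpoch (a * c) q n.+1 != 0)
  (had : qpoch (a * d) q n.+1 != 0)
  (habcd : forall m : int, -1 <= m <= 2 * n%:Z ->
             1 - a * b * c * d * q ^ m != 0).

Let E := a * b * c * d * (q ^+ n / q).

Lemma nzE j : (j <= n.+1)%N -> 1 - E * q ^+ j != 0.
Proof.
move=> hj.
have := habcd ((n + j)%N%:Z - 1).
rewrite exprz_m1 // /E exprD.
have -> : a * b * c * d * (q ^+ n * q ^+ j / q) = a * b * c * d * (q ^+ n / q) * q ^+ j by ring.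
apply.
apply/andP; split; clear -hj; lia.
Qed.


Lemma nzQE j : (j <= n.+2)%N -> qpoch E q j != 0.
Proof.
elim: j => [|j IH] hj; first by rewrite qpoch0 oner_neq0.
rewrite qpochS mulf_neq0 ?IH ?nzE //; clear -hj; lia.
Qed.

Lemma qE1 : a * b * c * d * q ^ (n%:Z - 1) = E.
Proof. by rewrite exprz_m1. Qed.
Lemma qE2 : a * b * c * d * q ^ (n.+1%:Z - 1) = E * q.
Proof. rewrite exprz_m1 // /E exprS; by field. Qed.
Lemma qE3 : a * q * b * c * d * q ^ (n%:Z - 1) = E * q.
Proof. rewrite exprz_m1 // /E; by field. Qed.
Lemma qE4 : a * b * c * d * q ^ (2 * n%:Z - 1) = E * q ^+ n.
Proof.
have -> : 2 * n%:Z - 1 = (n + n)%N%:Z - 1 by clear; lia.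
rewrite exprz_m1 // /E exprD; by field.
Qed.
Lemma qE5 : a * b * c * d * q ^+ (2 * n) = E * q ^+ n * q.
Proof. rewrite /E mul2n -addnn exprD; by field. Qed.

Lemma qinvS : q ^- n.+1 * q = q ^- n.
Proof. rewrite exprS; field; by rewrite expf_neq0. Qed.


Lemma nzpow : q ^+ n != 0 /\ a ^+ n != 0 /\ 2%:R ^+ n != 0 :> R.
Proof. by rewrite !expf_neq0. Qed.

Lemma nE0 : 1 - E != 0.
Proof. by have := @nzE 0 isT; rewrite expr0 mulr1. Qed.
Lemma nab : 1 - a * b != 0.
Proof. by have := @qpoch_fac R (a*b) q n.+1 0 hab isT; rewrite expr0 mulr1. Qed.
Lemma nac : 1 - a * c != 0.
Proof. by have := @qpoch_fac R (a*c) q n.+1 0 hac isT; rewrite expr0 mulr1. Qed.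
Lemma nad : 1 - a * d != 0.
Proof. by have := @qpoch_fac R (a*d) q n.+1 0 had isT; rewrite expr0 mulr1. Qed.

Lemma nzEq j : (j <= n.+1)%N -> q - a*b*c*d*q^+n*q^+j != 0.
Proof.
move=> hj; have := @nzE j hj; apply: contra_neq => h.
rewrite /E; apply: (mulfI hq); rewrite mulr0 -h; by field.
Qed.

Lemma nzEq1 j : (j <= n)%N -> 1 - a*b*c*d*q^+n*q^+j != 0.
Proof.
move=> hj; have := @nzE j.+1 ltac:(clear -hj; lia); apply: contra_neq => h.
rewrite -h /E exprS; by field.
Qed.

Lemma pool k : (k <= n)%N ->
  (qpoch (a*b) q k != 0 /\ qpoch (a*c) q k != 0 /\ qpoch (a*d) q k != 0 /\
      qpoch q q k != 0 /\ qpoch E q k != 0 /\ qpoch E q n != 0) /\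
  (1 - a*b*q^+k != 0 /\ 1 - a*c*q^+k != 0 /\ 1 - a*d*q^+k != 0 /\
      1 - q*q^+k != 0 /\ 1 - E*q^+k != 0 /\ 1 - E*q^+k*q != 0) /\
  (1 - E*q^+n != 0 /\ 1 - E*q^+n*q != 0 /\ q^+k != 0 /\ 1 - a*b*q^+n != 0) /\
  (q - a*b*c*d*q^+n != 0 /\ q - a*b*c*d*q^+n*q^+n != 0 /\ 1 - a*b*c*d*q^+n*q^+n != 0 /\
   q - a*b*c*d*q^+n*q^+k != 0 /\ 1 - a*b*c*d*q^+n*q^+k != 0).
Proof.
move=> hk; repeat apply: conj.
- by apply: (qpoch_pre hab); clear -hk; lia.
- by apply: (qpoch_pre hac); clear -hk; lia.
- by apply: (qpoch_pre had); clear -hk; lia.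
- by apply: (qpoch_pre hqq); clear -hk; lia.
- by apply: nzQE; clear -hk; lia.
- by apply: nzQE; clear -hk; lia.
- by apply: (qpoch_fac hab); clear -hk; lia.
- by apply: (qpoch_fac hac); clear -hk; lia.
- by apply: (qpoch_fac had); clear -hk; lia.
- by apply: (qpoch_fac hqq); clear -hk; lia.
- by apply: nzE; clear -hk; lia.
- by rewrite -mulrA -exprSr; apply: nzE; clear -hk; lia.
- by apply: nzE; clear -hk; lia.
- by rewrite -mulrA -exprSr; apply: nzE; clear -hk; lia.
- by rewrite expf_neq0.
- by apply: (qpoch_fac hab); clear -hk; lia.
- by have := @nzEq 0 isT; rewrite expr0 mulr1.
- by apply: nzEq; clear -hk; lia.
- by apply: nzEq1; clear -hk; lia.
- by apply: nzEq; clear -hk; lia.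
- by apply: nzEq1; clear -hk; lia.
Qed.

Ltac finish k :=
  generalize (@pool k ltac:(first [assumption | exact: leq0n | exact: leqnn])); intros [[? [? [? [? [? ?]]]]] [[? [? [? [? [? ?]]]]] [[? [? [? ?]]] [? [? [? [? ?]]]]]]];
  have [? [? ?]] := nzpow; have ? := nE0; have ? := nab; have ? := nac; have ? := nad;
  clearbody E;
  move: (qpoch (a*b) q n) (qpoch (a*c) q n) (qpoch (a*d) q n) => G1 G2 G3;
  repeat match goal with H : is_true (_ != 0) |- _ => revert H end;
  move: (qpoch (a*b) q k) (qpoch (a*c) q k) (qpoch (a*d) q k) (qpoch q q k)
        (qpoch E q k) (qpoch (q ^- n) q k) (qpoch E q n) => P1 P2 P3 P4 S M W;
  move: (q ^+ n) (q ^+ k) (a ^+ n) (2%:R ^+ n) => N T An Q2;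
  intros; field; repeat (apply/andP; split); try assumption; try exact: oner_neq0.

Ltac finish0 :=
  generalize (@pool 0 (leq0n n)); intros [[? [? [? [? [? ?]]]]] [[? [? [? [? [? ?]]]]] [[? [? [? ?]]] [? [? [? [? ?]]]]]]];
  have [? [? ?]] := nzpow; have ? := nE0; have ? := nab; have ? := nac; have ? := nad;
  clearbody E;
  move: (qpoch (a*b) q n) (qpoch (a*c) q n) (qpoch (a*d) q n) => G1 G2 G3;
  repeat match goal with H : is_true (_ != 0) |- _ => revert H end;
  move: (qpoch E q n) => W;
  move: (q ^+ n) (a ^+ n) (2%:R ^+ n) => N An Q2;
  intros; field; repeat (apply/andP; split); try assumption; try exact: oner_neq0.


Let NN := q ^+ n.

Lemma Cf_zero a' b' c' d' : Cf a' b' c' d' q n n.+1 = 0.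
Proof. by rewrite /Cf qpoch_qn // !mul0r mulr0. Qed.

Lemma eBA : b * a * c * d = a * b * c * d.
Proof. ring. Qed.

Lemma qE6 : a * (b * q) * c * d * q ^ (n%:Z - 1) = E * q.
Proof. rewrite exprz_m1 // /E; by field. Qed.

Lemma r1 k : (k <= n)%N ->
  Cf a b c d q n.+1 k.+1 = Cf a b c d q n k *
   (a^-1 * (1 - a*b*NN) * (1 - a*c*NN) * (1 - a*d*NN) * (1 - E) / (2%:R * (1 - E*NN) * (1 - E*NN*q))
    * ((1 - (NN*q)^-1) * (1 - E*q^+k) * (1 - E*q^+k*q) / (1 - E) * q
       / ((1 - a*b*q^+k) * (1 - a*c*q^+k) * (1 - a*d*q^+k) * (1 - q*q^+k)))).
Proof.
move=> hk; rewrite /Cf /NN qE1 qE2.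
rewrite [qpoch (q ^- n.+1) _ _]qpochSl qinvS.
rewrite !(@qpoch_shift R E q _ nE0).
rewrite !qpochS !exprS.
finish k.
Qed.


Lemma r2 k : (k <= n)%N ->
  Cf a b c d q n k.+1 = Cf a b c d q n k *
   ((1 - q ^- n * q^+k) * (1 - E*q^+k) * q
       / ((1 - a*b*q^+k) * (1 - a*c*q^+k) * (1 - a*d*q^+k) * (1 - q*q^+k))).
Proof.
move=> hk; rewrite /Cf qE1.
rewrite !qpochS !exprS.
finish k.
Qed.

Lemma r3 k : (k <= n)%N ->
  Cf (a * q) b c d q n k = Cf a b c d q n k *
   (NN^-1 * (1 - a*b*NN) * (1 - a*c*NN) * (1 - a*d*NN) / (1 - E*NN)
    * (1 - E*q^+k) / ((1 - a*b*q^+k) * (1 - a*c*q^+k) * (1 - a*d*q^+k))).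
Proof.
move=> hk; rewrite /Cf /NN qE1 qE3.
have e1 : a * q * b = a * b * q by ring.
have e2 : a * q * c = a * c * q by ring.
have e3 : a * q * d = a * d * q by ring.
rewrite e1 e2 e3.
rewrite !(@qpoch_shift R E q _ nE0) !(@qpoch_shift R (a*b) q _ nab) !(@qpoch_shift R (a*c) q _ nac) !(@qpoch_shift R (a*d) q _ nad).
rewrite exprMn.
finish k.
Qed.

Lemma r4 k : (k <= n)%N ->
  Cf a (b * q) c d q n k = Cf a b c d q n k *
   ((1 - a*b*NN) * (1 - E*q^+k) / ((1 - E*NN) * (1 - a*b*q^+k))).
Proof.
move=> hk; rewrite /Cf /NN qE1 qE6.
have e1 : a * (b * q) = a * b * q by ring.
rewrite e1.
rewrite !(@qpoch_shift R E q _ nE0) !(@qpoch_shift R (a*b) q _ nab).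
finish k.
Qed.

Lemma r5 :
  Cf a b c d q n.+1 0 = Cf a b c d q n 0 *
   (a^-1 * (1 - a*b*NN) * (1 - a*c*NN) * (1 - a*d*NN) * (1 - E) / (2%:R * (1 - E*NN) * (1 - E*NN*q))).
Proof.
rewrite /Cf /NN qE1 qE2 !qpoch0 !expr0.
rewrite !(@qpoch_shift R E q _ nE0).
rewrite !qpochS !exprS.
finish0.
Qed.


Ltac finishC k :=
  generalize (@pool k ltac:(first [assumption | exact: leq0n | exact: leqnn])); intros [[? [? [? [? [? ?]]]]] [[? [? [? [? [? ?]]]]] [[? [? [? ?]]] [? [? [? [? ?]]]]]]];
  have [? [? ?]] := nzpow; have ? := nE0; have ? := nab; have ? := nac; have ? := nad;
  rewrite /NN; unfold E in *;
  repeat match goal with H : is_true (_ != 0) |- _ => revert H end;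
  move: (Cf a b c d q n k) => C;
  move: (q ^+ n) (q ^+ k) => N T;
  intros; field; repeat (apply/andP; split); try assumption; try exact: oner_neq0.

Lemma coefA k : (k <= n)%N ->
  Cf a b c d q n.+1 k.+1 + kcoef a b c d q n * Cf a b c d q n k.+1
  = - (2%:R * a)^-1 * Cf (a * q) b c d q n k.
Proof.
move=> hk; rewrite (@r1 k hk) (@r2 k hk) (@r3 k hk) /kcoef qE1 qE4 qE5.
finishC k.
Qed.

Lemma coefA0 :
  Cf a b c d q n.+1 0 + kcoef a b c d q n * Cf a b c d q n 0 = 0.
Proof.
rewrite r5 /kcoef qE1 qE4 qE5.
finishC 0%N.
Qed.

Lemma coefB0 :
  Cf a b c d q n.+1 0 + kcoef b a c d q n * Cf a b c d q n 0
  = Cf a (b * q) c d q n 0 * gam a b q 0 - 0.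
Proof.
rewrite r5 (@r4 0 (leq0n n)) /kcoef /gam eBA qE1 qE4 qE5 !expr0.
finishC 0%N.
Qed.

Lemma coefBS k : (k < n)%N ->
  Cf a b c d q n.+1 k.+1 + kcoef b a c d q n * Cf a b c d q n k.+1
  = Cf a (b * q) c d q n k.+1 * gam a b q k.+1 - Cf a (b * q) c d q n k / (2%:R * a * q ^+ k).
Proof.
move=> hk.
have hk' : (k <= n)%N by apply: ltnW.
have nabk : 1 - a * b * (q * q ^+ k) != 0 by rewrite -exprS; apply: (qpoch_fac hab); clear -hk; lia.
rewrite (@r4 k.+1 hk) (@r4 k hk') (@r2 k hk') (@r1 k hk') /kcoef /gam eBA qE1 qE4 qE5.
have e2 : (2 * k.+1 = k.+1 + k.+1)%N by clear; lia.
rewrite e2 exprD !exprS.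
finishC k.
Qed.

Lemma coefBn :
  Cf a b c d q n.+1 n.+1 + kcoef b a c d q n * Cf a b c d q n n.+1
  = Cf a (b * q) c d q n n.+1 * gam a b q n.+1 - Cf a (b * q) c d q n n / (2%:R * a * q ^+ n).
Proof.
rewrite !Cf_zero // mulr0 mul0r addr0 sub0r.
rewrite (@r1 n (leqnn n)) (@r4 n (leqnn n)).
finishC n.
Qed.


Lemma caseA x :
  (x - (a^-1 + a) / 2%:R) * awm x (a * q) b c d q n
  = awm x a b c d q n.+1 + kcoef a b c d q n * awm x a b c d q n.
Proof.
rewrite !awm_sum.
rewrite (@sum_ext R (Cf a b c d q n)) ?Cf_zero //.
rewrite !mulr_sumr -big_split /=.
have -> : \sum_(i < n.+1) (x - (a^-1 + a) / 2%:R) * (Cf (a * q) b c d q n i * qpochx (a * q) x q i)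
  = \sum_(i < n.+1) (- (2%:R * a)^-1 * Cf (a * q) b c d q n i) * qpochx a x q i.+1.
  apply: eq_bigr => i _; rewrite qpochxSl; move: (Cf _ _ _ _ _ _ _) (qpochx _ _ _ _) => C P; field; by rewrite ha h2.
rewrite (@sum_shift R (fun k => - (2%:R * a)^-1 * Cf (a * q) b c d q n k)).
apply: eq_bigr => [[[|k] hk]] _ /=.
  by rewrite mulrA -mulrDl coefA0 !mul0r.
by rewrite mulrA -mulrDl coefA //; clear -hk; lia.
Qed.


Lemma caseB x :
  (x - (b^-1 + b) / 2%:R) * awm x a (b * q) c d q n
  = awm x a b c d q n.+1 + kcoef b a c d q n * awm x a b c d q n.
Proof.
rewrite !awm_sum.
rewrite (@sum_ext R (Cf a b c d q n)) ?Cf_zero //.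
rewrite !mulr_sumr -big_split /=.
have -> : \sum_(i < n.+1) (x - (b^-1 + b) / 2%:R) * (Cf a (b * q) c d q n i * qpochx a x q i)
  = \sum_(i < n.+1) (Cf a (b * q) c d q n i * gam a b q i) * qpochx a x q i
    - \sum_(i < n.+1) (Cf a (b * q) c d q n i / (2%:R * a * q ^+ i)) * qpochx a x q i.+1.
  rewrite -sumrB; apply: eq_bigr => i _; rewrite qpochxS /gam.
  have hqi : q ^+ i != 0 by rewrite expf_neq0.
  move: (Cf _ _ _ _ _ _ _) (qpochx _ _ _ _) (q ^+ i) (q ^+ (2 * i)) hqi => C P T T2 hT.
  field; by rewrite ha h2 hT.
rewrite (@sum_ext R (fun k => Cf a (b * q) c d q n k * gam a b q k)) /=; last by rewrite Cf_zero // mul0r.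
rewrite (@sum_shift R (fun k => Cf a (b * q) c d q n k / (2%:R * a * q ^+ k))).
rewrite -sumrB; apply: eq_bigr => [[[|k] hk]] _ /=.
  by rewrite mulrA -mulrDl coefB0 mulrBl.
rewrite mulrA -mulrDl -mulrBl; congr (_ * _).
have [hkn | hkn] := ltnP k n.
  by rewrite coefBS.
have -> : k = n by clear -hk hkn; lia.
by rewrite coefBn.
Qed.

End Co.

Lemma Cf_swap12 (R : fieldType) (a b c d q : R) n k : Cf a b c d q n k = Cf a c b d q n k.
Proof.
rewrite /Cf (_ : a * c * b * d = a * b * c * d); last by ring.
have -> : qpoch (a * c) q k * qpoch (a * b) q k * qpoch (a * d) q k * qpoch q q k
  = qpoch (a * b) q k * qpoch (a * c) q k * qpoch (a * d) q k * qpoch q q k by ring.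
ring.
Qed.

Lemma Cf_swap13 (R : fieldType) (a b c d q : R) n k : Cf a b c d q n k = Cf a d c b q n k.
Proof.
rewrite /Cf (_ : a * d * c * b = a * b * c * d); last by ring.
have -> : qpoch (a * d) q k * qpoch (a * c) q k * qpoch (a * b) q k * qpoch q q k
  = qpoch (a * b) q k * qpoch (a * c) q k * qpoch (a * d) q k * qpoch q q k by ring.
ring.
Qed.

Lemma awm_swap12 (R : fieldType) (x a b c d q : R) n : awm x a b c d q n = awm x a c b d q n.
Proof. by rewrite !awm_sum; apply: eq_bigr => k _; rewrite Cf_swap12. Qed.

Lemma awm_swap13 (R : fieldType) (x a b c d q : R) n : awm x a b c d q n = awm x a d c b q n.
Proof. by rewrite !awm_sum; apply: eq_bigr => k _; rewrite Cf_swap13. Qed.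

Lemma kcoef_swap12 (R : fieldType) (a b c d q : R) n : kcoef a b c d q n = kcoef a c b d q n.
Proof.
rewrite /kcoef (_ : a * c * b * d = a * b * c * d); last by ring.
congr (- _ / _); ring.
Qed.

Lemma kcoef_swap13 (R : fieldType) (a b c d q : R) n : kcoef a b c d q n = kcoef a d c b q n.
Proof.
rewrite /kcoef (_ : a * d * c * b = a * b * c * d); last by ring.
congr (- _ / _); ring.
Qed.

Theorem lemma4p1 (R : fieldType) (a b c d q x : R) (n : nat)
  (h2 : 2%:R != 0 :> R)
  (ha : a != 0) (hb : b != 0) (hc : c != 0) (hd : d != 0) (hq : q != 0)
  (hqq : qpoch q q n.+1 != 0)
  (hab : qpoch (a * b) q n.+1 != 0) (hac : qpoch (a * c) q n.+1 != 0)
  (had : qpoch (a * d) q n.+1 != 0)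
  (habcd : forall m : int, -1 <= m <= 2 * n%:Z ->
             1 - a * b * c * d * q ^ m != 0) :
  [/\ (x - (a^-1 + a) / 2%:R) * awm x (a * q) b c d q n
        = awm x a b c d q n.+1 + kcoef a b c d q n * awm x a b c d q n,
      (x - (b^-1 + b) / 2%:R) * awm x a (b * q) c d q n
        = awm x a b c d q n.+1 + kcoef b a c d q n * awm x a b c d q n,
      (x - (c^-1 + c) / 2%:R) * awm x a b (c * q) d q n
        = awm x a b c d q n.+1 + kcoef c b a d q n * awm x a b c d q n
    & (x - (d^-1 + d) / 2%:R) * awm x a b c (d * q) q n
        = awm x a b c d q n.+1 + kcoef d b c a q n * awm x a b c d q n].
Proof.
split.
- by apply: caseA.
- by apply: caseB.
- have h' : forall m : int, -1 <= m <= 2 * n%:Z -> 1 - a * c * b * d * q ^ m != 0.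
    by move=> m hm; rewrite (_ : a * c * b * d = a * b * c * d) ?habcd //; ring.
  rewrite [awm x a b (c * q) d q n]awm_swap12 [awm x a b c d q n.+1]awm_swap12 [awm x a b c d q n]awm_swap12.
  rewrite [kcoef c b a d q n]kcoef_swap12.
  by apply: caseB.
- have h' : forall m : int, -1 <= m <= 2 * n%:Z -> 1 - a * d * c * b * q ^ m != 0.
    by move=> m hm; rewrite (_ : a * d * c * b = a * b * c * d) ?habcd //; ring.
  rewrite [awm x a b c (d * q) q n]awm_swap13 [awm x a b c d q n.+1]awm_swap13 [awm x a b c d q n]awm_swap13.
  rewrite [kcoef d b c a q n]kcoef_swap13.
  by apply: caseB.
Qed.
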